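(* Assume the demand is i.i.d. with pmf $P_X$. Let $\theta\in\mathcal P_S$ and $\xi(w)=\sum_{(x,s):s-x=w}P_X(x)\theta(s)$. Then the structured policy $\mathbf b=(b,b,\dots)$ with respect to $(\theta,\xi)$ is an invariant policy for the initial battery distribution $\theta$.
   Context: $\mathcal X=\{0,\dots,m_x\}$, $\mathcal Y=\{0,\dots,m_y\}$, $\mathcal S=\{0,\dots,m_s\}$ with $m_x\le m_y$; $\mathcal W=\{s-x\}$; $\mathcal P_S$ the pmfs on $\mathcal S$; $\mathcal Y_\circ(w)=\{y\in\mathcal Y:w+y\in\mathcal S\}$. Demand $X_t$ i.i.d. $\sim P_X$ independent of $S_1$. A constant-distribution policy $b$ (conditional pmf with $b(\mathcal Y_\circ(w)\mid w)=1$) draws $Y_t\sim b(\cdot\mid W_t)$, $W_t=S_t-X_t$, $S_{t+1}=S_t+Y_t-X_t$. The structured policy with respect to $(\theta,\xi)$ is $b(y\mid w)=P_X(y)\theta(y+w)/\xi(w)$ for $y\in\mathcal X\cap\mathcal Y_\circ(w)$ and $0$ otherwise (when $\xi(w)=0$, $b(\cdot\mid w)$ is an arbitrary pmf on $\mathcal Y_\circ(w)$; such $w$ occur with probability zero). With $\theta_t(s)=P(S_t=s\mid Y^{t-1}=y^{t-1})$ and $\xi_t(w)=P(W_t=w\mid Y^{t-1}=y^{t-1})$, $b$ is invariant for initial distribution $\theta_1$ (i.e. when $S_1\sim\theta_1$) if $\theta_t=\theta_1$ and $\xi_t=\xi_1$ for all $t$, where $\xi_1(w)=\sum_{(x,s):s-x=w}P_X(x)\theta_1(s)$.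 *)

(* Defs.v *)
From mathcomp Require Import all_boot all_order all_algebra.
Set Implicit Arguments. Unset Strict Implicit. Unset Printing Implicit Defensive.
Import Order.TTheory GRing.Theory Num.Theory.
Local Open Scope ring_scope.

Section Model.
Variables (R : realFieldType) (mx my ms : nat).

Definition ext (m : nat) (f : {ffun 'I_m.+1 -> R}) (k : int) : R :=
  match k with
  | Posz n => if (n < m.+1)%N then f (inord n) else 0
  | Negz _ => 0
  end.

Definition is_pmf (m : nat) (f : {ffun 'I_m.+1 -> R}) : Prop :=
  (forall i, 0 <= f i) /\ \sum_i f i = 1.

Definition inW (w : int) : Prop :=
  exists (s : 'I_ms.+1) (x : 'I_mx.+1), w = (s : nat)%:Z - (x : nat)%:Z.

Definition inYo (w : int) (y : 'I_my.+1) : bool :=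
  (0 <= w + (y : nat)%:Z) && (w + (y : nat)%:Z <= (ms : nat)%:Z).

Definition xi_of (PX : {ffun 'I_mx.+1 -> R}) (th : {ffun 'I_ms.+1 -> R})
  (w : int) : R :=
  \sum_(x : 'I_mx.+1) \sum_(s : 'I_ms.+1 | (s : nat)%:Z - (x : nat)%:Z == w)
     PX x * th s.

Definition cond_pmf_at (b : int -> 'I_my.+1 -> R) (w : int) : Prop :=
  (forall y, 0 <= b w y) /\ \sum_y b w y = 1 /\
  (forall y, ~~ inYo w y -> b w y = 0).

Definition structured (PX : {ffun 'I_mx.+1 -> R}) (th : {ffun 'I_ms.+1 -> R})
  (xi : int -> R) (b : int -> 'I_my.+1 -> R) : Prop :=
  forall w, inW w ->
    if xi w != 0 then
      forall y : 'I_my.+1,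
        b w y = (if ((y : nat) <= mx)%N && inYo w y
                 then PX (inord y) * ext th (w + (y : nat)%:Z) / xi w
                 else 0)
    else cond_pmf_at b w.

Definition traj (n : nat) : finType :=
  ('I_ms.+1 * {ffun 'I_n -> 'I_mx.+1} * {ffun 'I_n -> 'I_my.+1})%type.

Definition S1 n (om : traj n) : 'I_ms.+1 := om.1.1.
Definition Xs n (om : traj n) : {ffun 'I_n -> 'I_mx.+1} := om.1.2.
Definition Ys n (om : traj n) : {ffun 'I_n -> 'I_my.+1} := om.2.

(* state S_{k+1} = S_1 + sum_{i<k} (Y_{i+1} - X_{i+1}) (0-based steps) *)
Definition state n (om : traj n) (k : nat) : int :=
  ((S1 om : nat)%:Z) +
  \sum_(i < n | (i < k)%N) (((Ys om i : nat)%:Z) - ((Xs om i : nat)%:Z)).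

(* W_{i+1} = S_{i+1} - X_{i+1} *)
Definition wstate n (om : traj n) (i : 'I_n) : int :=
  state om i - ((Xs om i : nat)%:Z).

Definition weight (PX : {ffun 'I_mx.+1 -> R}) (th : {ffun 'I_ms.+1 -> R})
  (b : int -> 'I_my.+1 -> R) n (om : traj n) : R :=
  th (S1 om) * \prod_(i < n) (PX (Xs om i) * b (wstate om i) (Ys om i)).

Definition prob PX th b n (A : pred (traj n)) : R :=
  \sum_(om : traj n | A om) weight PX th b om.

Definition prefY k (y : {ffun 'I_k -> 'I_my.+1}) (om : traj k.+1) : bool :=
  [forall i : 'I_k, Ys om (widen_ord (leqnSn k) i) == y i].

End Model.

(* Main.v *)
Require Import Defs.
From mathcomp Require Import all_boot all_order all_algebra.
From mathcomp Require Import ring.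
Set Implicit Arguments. Unset Strict Implicit. Unset Printing Implicit Defensive.
Import Order.TTheory GRing.Theory Num.Theory.
Local Open Scope ring_scope.

Section Aux.
Variables (R : realFieldType) (mx my ms : nat).
Variables (PX : {ffun 'I_mx.+1 -> R}) (th : {ffun 'I_ms.+1 -> R})
  (b : int -> 'I_my.+1 -> R).

Definition extf n (T : Type) (g : {ffun 'I_n -> T}) (t : T) : {ffun 'I_n.+1 -> T} :=
  [ffun i => if unlift ord_max i is Some j then g j else t].

Lemma extf_max n T (g : {ffun 'I_n -> T}) t : extf g t ord_max = t.
Proof. by rewrite ffunE unlift_none. Qed.

Lemma widen_lift n (j : 'I_n) : widen_ord (leqnSn n) j = lift ord_max j.
Proof. apply: val_inj => /=; rewrite /bump leqNgt ltn_ord //. Qed.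

Lemma extf_widen n T (g : {ffun 'I_n -> T}) t j : extf g t (widen_ord (leqnSn n) j) = g j.
Proof. by rewrite ffunE widen_lift liftK. Qed.

Definition extt n (om : traj mx my ms n) (x : 'I_mx.+1) (yl : 'I_my.+1) : traj mx my ms n.+1 :=
  ((S1 om, extf (Xs om) x), extf (Ys om) yl).

Definition unext n (om : traj mx my ms n.+1) : ('I_mx.+1 * 'I_my.+1) * traj mx my ms n :=
  ((Xs om ord_max, Ys om ord_max),
   ((S1 om, [ffun j => Xs om (widen_ord (leqnSn n) j)]),
    [ffun j => Ys om (widen_ord (leqnSn n) j)])).

Lemma extf_surj n T (f : {ffun 'I_n.+1 -> T}) :
  extf [ffun j => f (widen_ord (leqnSn n) j)] (f ord_max) = f.
Proof.
apply/ffunP => i; rewrite ffunE; case: unliftP => [j ->|->] //.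
by rewrite ffunE widen_lift.
Qed.

Lemma sum_traj_S n (F : traj mx my ms n.+1 -> R) :
  \sum_(om : traj mx my ms n.+1) F om =
  \sum_(x : 'I_mx.+1) \sum_(yl : 'I_my.+1) \sum_(om : traj mx my ms n) F (extt om x yl).
Proof.
rewrite (reindex (fun p : ('I_mx.+1 * 'I_my.+1) * traj mx my ms n => extt p.2 p.1.1 p.1.2)) /=.
  symmetry; rewrite pair_big /= pair_big /=.
  by apply: eq_bigr => -[[x yl] om] _.
apply: onW_bij; exists (@unext n).
  move=> [[x yl] [[s1 xs] ys]]; rewrite /unext /extt /S1 /Xs /Ys /= !extf_max.
  congr (_, ((_, _), _)); apply/ffunP => j; by rewrite ffunE extf_widen.
move=> [[s1 xs] ys]; rewrite /unext /extt /S1 /Xs /Ys /=.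
by rewrite !extf_surj.
Qed.


Lemma sum_ext_lt n (F : 'I_n.+1 -> int) m : (m <= n)%N ->
  \sum_(i < n.+1 | (i < m)%N) F i = \sum_(i < n | (i < m)%N) F (widen_ord (leqnSn n) i).
Proof.
move=> hm; rewrite big_mkcond big_ord_recr /= ltnNge hm /= addr0.
by rewrite [RHS]big_mkcond.
Qed.

Lemma state_ext n (om : traj mx my ms n) x yl m : (m <= n)%N ->
  state (extt om x yl) m = state om m.
Proof.
move=> hm; rewrite /state sum_ext_lt //; congr (_ + _).
by apply: eq_bigr => i _; rewrite /Ys /Xs /extt /= !extf_widen.
Qed.

Lemma state_ext_last n (om : traj mx my ms n) x yl :
  state (extt om x yl) n.+1 = state om n + ((yl : nat)%:Z - (x : nat)%:Z).
Proof.
rewrite /state big_mkcond big_ord_recr /= ltnSn -addrA; congr (_ + _).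
rewrite /Ys /Xs /extt /= !extf_max; congr (_ + _).
rewrite [RHS]big_mkcond; apply: eq_bigr => i _ /=.
by rewrite !extf_widen ltnS ltn_ord (ltnW (ltn_ord i)).
Qed.

Lemma wstate_ext n (om : traj mx my ms n) x yl i :
  wstate (extt om x yl) (widen_ord (leqnSn n) i) = wstate om i.
Proof.
rewrite /wstate state_ext /=; last exact: ltnW.
by rewrite /Xs /extt /= extf_widen.
Qed.

Lemma wstate_ext_last n (om : traj mx my ms n) x yl :
  wstate (extt om x yl) ord_max = state om n - (x : nat)%:Z.
Proof. by rewrite /wstate /= state_ext // /Xs /extt /= extf_max. Qed.

Lemma weight_ext n (om : traj mx my ms n) x yl :
  weight PX th b (extt om x yl) =
  weight PX th b om * (PX x * b (state om n - (x : nat)%:Z) yl).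
Proof.
rewrite /weight big_ord_recr /= -mulrA; congr (_ * (_ * _)).
  apply: eq_bigr => i _; by rewrite wstate_ext /Xs /Ys /extt /= !extf_widen.
by rewrite wstate_ext_last /Xs /Ys /extt /= !extf_max.
Qed.

Lemma prefY_ext k (y : {ffun 'I_k -> 'I_my.+1}) (om : traj mx my ms k) x yl :
  prefY y (extt om x yl) = (Ys om == y).
Proof.
apply/forallP/eqP => [H|E] ; last by move=> i; rewrite /Ys /extt /= extf_widen -E.
apply/ffunP => i; apply/eqP; move: (H i); by rewrite /Ys /extt /= extf_widen.
Qed.

Lemma Ys_ext_eq n (om : traj mx my ms n) x yl (y : {ffun 'I_n.+1 -> 'I_my.+1}) :
  (Ys (extt om x yl) == y) =
  (Ys om == [ffun j => y (widen_ord (leqnSn n) j)]) && (yl == y ord_max).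
Proof.
rewrite -{1}(extf_surj y) /Ys /extt /=.
apply/eqP/andP => [E|[/eqP E1 /eqP E2]]; last by rewrite -E1 -E2.
split; apply/eqP.
  apply/ffunP => j; rewrite ffunE -(extf_widen (Ys om) yl) E extf_widen ffunE //.
by rewrite -(extf_max (Ys om) yl) E extf_max.
Qed.


Lemma ext_ord (s : 'I_ms.+1) : ext th (s : nat)%:Z = th s.
Proof. by rewrite /= ltn_ord inord_val. Qed.

Lemma pick_sum (f : int -> R) (z : int) :
  \sum_(s : 'I_ms.+1 | (s : nat)%:Z == z) f (s : nat)%:Z =
  if (0 <= z) && (z <= (ms : nat)%:Z) then f z else 0.
Proof.
case: ifP => [/andP [z0 zm]|hz].
  case: z z0 zm => [n|n] // _ zm.
  have hn : (n < ms.+1)%N by rewrite ltnS -lez_nat.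
  rewrite (big_pred1 (inord n)) => [|s]; first by rewrite /= inordK.
  by rewrite /= eqz_nat; apply/eqP/eqP => [<-|->]; [rewrite inord_val | rewrite inordK].
rewrite big_pred0 // => s; apply/negbTE/eqP => E.
by move: hz; rewrite -E lez_nat -ltnS ltn_ord.
Qed.

Hypotheses (Hmxy : (mx <= my)%N) (HPX : is_pmf PX) (Hth : is_pmf th)
  (Hst : structured PX th (xi_of PX th) b).

Lemma xi0 w : xi_of PX th w = 0 -> forall (x : 'I_mx.+1) (s : 'I_ms.+1),
  (s : nat)%:Z - (x : nat)%:Z == w -> PX x * th s = 0.
Proof.
move=> H x s E.
have H1 := psumr_eq0P _ H.
have H2 : \sum_(s0 : 'I_ms.+1 | (s0 : nat)%:Z - (x : nat)%:Z == w) PX x * th s0 = 0.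
  apply: H1 => // i _; apply: sumr_ge0 => j _; apply: mulr_ge0; [exact: HPX.1 | exact: Hth.1].
  apply: (psumr_eq0P _ H2) => // j _; apply: mulr_ge0; [exact: HPX.1 | exact: Hth.1].
Qed.


Lemma xi_alt w : xi_of PX th w =
  \sum_(x < mx.+1) (if (0 <= w + (x : nat)%:Z) && (w + (x : nat)%:Z <= (ms : nat)%:Z)
                    then PX (inord x) * ext th (w + (x : nat)%:Z) else 0).
Proof.
rewrite /xi_of; apply: eq_bigr => x _.
rewrite inord_val -mulr_sumr.
under eq_bigl => s do rewrite subr_eq.
under eq_bigr => s _ do rewrite -ext_ord.
rewrite (pick_sum (fun t => ext th t)).
by case: ifP => _; rewrite ?mulr0.
Qed.

Lemma bsum w : inW mx ms w -> \sum_y b w y = 1.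
Proof.
move=> hw; have := Hst hw; case: ifP => [nz Hb|_ [_ [H _]] //].
under eq_bigr => y _ do rewrite Hb.
set G := fun n : nat => if (0 <= w + n%:Z) && (w + n%:Z <= (ms : nat)%:Z)
                    then PX (inord n) * ext th (w + n%:Z) else 0.
have -> : \sum_(y < my.+1) (if ((y : nat) <= mx)%N && inYo ms w y
      then PX (inord y) * ext th (w + (y : nat)%:Z) / xi_of PX th w else 0)
     = (\sum_(y < my.+1) (if ((y : nat) < mx.+1)%N then G y else 0)) / xi_of PX th w.
  rewrite big_distrl /=; apply: eq_bigr => y _; rewrite /G /inYo ltnS.
  by case: (y <= mx)%N => /=; [case: ifP => _ | ]; rewrite ?mul0r.
rewrite -big_mkcond /= -(big_ord_widen _ G) //.
have -> : \sum_(i < mx.+1) G i = xi_of PX th w by rewrite xi_alt.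
by rewrite divff.
Qed.


Lemma pw (x : 'I_mx.+1) (s : 'I_ms.+1) yl :
  th s * PX x * b ((s : nat)%:Z - (x : nat)%:Z) yl =
  th s * PX x * (if ((yl : nat) <= mx)%N && inYo ms ((s : nat)%:Z - (x : nat)%:Z) yl
                 then PX (inord yl) * ext th ((s : nat)%:Z - (x : nat)%:Z + (yl : nat)%:Z)
                      / xi_of PX th ((s : nat)%:Z - (x : nat)%:Z) else 0).
Proof.
have hw : inW mx ms ((s : nat)%:Z - (x : nat)%:Z) by exists s, x.
have := Hst hw; case: ifP => [_ Hb|/negbFE/eqP z _]; first by rewrite Hb.
by rewrite [th s * _]mulrC (xi0 z) ?eqxx // !mul0r.
Qed.

Lemma key yl (H : int -> R) :
  \sum_(x : 'I_mx.+1) \sum_(s : 'I_ms.+1)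
     th s * (PX x * b ((s : nat)%:Z - (x : nat)%:Z) yl *
             H ((s : nat)%:Z + ((yl : nat)%:Z - (x : nat)%:Z)))
  = (if ((yl : nat) <= mx)%N then PX (inord yl) else 0) *
    \sum_(s : 'I_ms.+1) th s * H (s : nat)%:Z.
Proof.
under eq_bigr => x _ do under eq_bigr => s _ do rewrite !mulrA pw.
case: ifP => hy; last first.
  rewrite mul0r big1 // => x _; rewrite big1 // => s _.
  by rewrite /= mulr0 mul0r.
set p := PX (inord yl).
set K := fun t : int => p * ext th t * H t / xi_of PX th (t - (yl : nat)%:Z).
have E : forall s' : 'I_ms.+1, p * (th s' * H (s' : nat)%:Z) =
   \sum_(x : 'I_mx.+1) \sum_(s : 'I_ms.+1)
     (if (s : nat)%:Z - (x : nat)%:Z == (s' : nat)%:Z - (yl : nat)%:Z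
      then PX x * th s * K (s' : nat)%:Z else 0).
  move=> s'.
  under eq_bigr => x _ do rewrite -big_mkcond -big_distrl /=.
  rewrite -big_distrl /= -/(xi_of PX th _) /K ext_ord.
  have [z|nz] := eqVneq (xi_of PX th ((s' : nat)%:Z - (yl : nat)%:Z)) 0.
    have hp : p * th s' = 0.
      apply: (xi0 z); rewrite /= inordK ?ltnS //.
    by rewrite z mul0r mulrA hp mul0r.
  by field.
rewrite mulr_sumr [RHS](eq_bigr _ (fun s0 _ => E s0)) [RHS]exchange_big /=.
apply: eq_bigr => x _.

rewrite [RHS]exchange_big /=; apply: eq_bigr => s _.
rewrite -big_mkcond /=.
under eq_bigl => s' do rewrite eq_sym subr_eq.
rewrite -big_distrr /= (pick_sum K).
rewrite /= /inYo /K.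
have -> : (s : nat)%:Z - (x : nat)%:Z + (yl : nat)%:Z - (yl : nat)%:Z =
          (s : nat)%:Z - (x : nat)%:Z by rewrite addrK.
have -> : (s : nat)%:Z + ((yl : nat)%:Z - (x : nat)%:Z) =
          (s : nat)%:Z - (x : nat)%:Z + (yl : nat)%:Z by ring.
by case: ifP => _; [ring | rewrite !mulr0 mul0r].
Qed.


Lemma sum_traj n (F : traj mx my ms n -> R) :
  \sum_(om : traj mx my ms n) F om =
  \sum_(s1 : 'I_ms.+1) \sum_(xs : {ffun 'I_n -> 'I_mx.+1}) \sum_(ys : {ffun 'I_n -> 'I_my.+1})
    F ((s1, xs), ys).
Proof.
symmetry; rewrite pair_big /= pair_big /=.
by apply: eq_bigr => -[[s1 xs] ys] _.
Qed.

Lemma sum_pick_last (T I : finType) (e : I) (A : T -> bool) (F : I -> T -> R) :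
  \sum_(i : I) \sum_(t : T) (if A t && (i == e) then F i t else 0) = \sum_(t | A t) F e t.
Proof.
rewrite (bigD1 e) //= [X in _ + X]big1 ?addr0; last first.
  by move=> i hi; apply: big1 => t _; rewrite (negbTE hi) andbF.
by rewrite [RHS]big_mkcond; apply: eq_bigr => t _; rewrite eqxx andbT.
Qed.

Lemma claim n (y : {ffun 'I_n -> 'I_my.+1}) : exists c, forall H : int -> R,
  \sum_(om : traj mx my ms n | Ys om == y) weight PX th b om * H (state om n)
  = c * \sum_(s : 'I_ms.+1) th s * H (s : nat)%:Z.
Proof.
elim: n y => [|n IH] y.
  exists 1 => H; rewrite mul1r big_mkcond sum_traj; apply: eq_bigr => s1 _.
  have E : forall (T : finType) (f g : {ffun 'I_0 -> T}), f = g.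
    by move=> T f g; apply/ffunP => -[].
  rewrite (eq_bigr (fun _ => th s1 * H (s1 : nat)%:Z *+ 1)); last first.
    move=> xs _; rewrite (eq_bigr (fun _ => th s1 * H (s1 : nat)%:Z)); last first.
      move=> ys _; rewrite (E _ ys y) eqxx /weight /state /S1 /= !big_ord0.
      by rewrite mulr1 addr0.
    by rewrite sumr_const card_ffun !card_ord expn0.
  by rewrite sumr_const card_ffun !card_ord expn0 !mulr1n.
have [c0 Hc] := IH [ffun j => y (widen_ord (leqnSn n) j)].
exists (c0 * (if ((y ord_max : nat) <= mx)%N then PX (inord (y ord_max)) else 0)) => H.
rewrite big_mkcond sum_traj_S.
under eq_bigr => x _ do under eq_bigr => yl _ do under eq_bigr => om _ do
  rewrite Ys_ext_eq weight_ext state_ext_last.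
under eq_bigr => x _ do rewrite sum_pick_last.
under eq_bigr => x _ do under eq_bigr => om _ do rewrite -mulrA.
under eq_bigr => x _ do rewrite
  (Hc (fun t => PX x * b (t - (x : nat)%:Z) (y ord_max) *
                H (t + ((y ord_max : nat)%:Z - (x : nat)%:Z)))).
by rewrite -big_distrr /= key mulrA.
Qed.


Lemma prob_gen k (y : {ffun 'I_k -> 'I_my.+1}) c
  (Hc : forall H : int -> R,
    \sum_(om : traj mx my ms k | Ys om == y) weight PX th b om * H (state om k)
    = c * \sum_(s : 'I_ms.+1) th s * H (s : nat)%:Z)
  (G : int -> 'I_mx.+1 -> bool) (A : pred (traj mx my ms k.+1)) :
  (forall om x yl, A (extt om x yl) = (Ys om == y) && G (state om k) x) ->
  prob PX th b A = c * \sum_(s : 'I_ms.+1) th s *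
      \sum_(x : 'I_mx.+1) (if G (s : nat)%:Z x then PX x else 0).
Proof.
move=> hA; rewrite /prob big_mkcond sum_traj_S.
under eq_bigr => x _ do under eq_bigr => yl _ do under eq_bigr => om _ do rewrite hA weight_ext.
under eq_bigr => x _ do rewrite exchange_big.
rewrite exchange_big /=.
pose H := (fun t => \sum_(x : 'I_mx.+1) \sum_(yl : 'I_my.+1)
     (if G t x then PX x * b (t - (x : nat)%:Z) yl else 0)).
transitivity (\sum_(om : traj mx my ms k | Ys om == y) weight PX th b om * H (state om k)).
  rewrite [RHS]big_mkcond; apply: eq_bigr => om _; case: (Ys om == y) => /=; last first.
    by apply: big1 => x _; apply: big1.
  rewrite mulr_sumr; apply: eq_bigr => x _; rewrite mulr_sumr; apply: eq_bigr => yl _.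
  by case: ifP => _; rewrite ?mulr0.
rewrite (Hc H) /H; congr (_ * _); apply: eq_bigr => s _; congr (_ * _).
apply: eq_bigr => x _; case: ifP => _; last by apply: big1.
by rewrite -mulr_sumr bsum ?mulr1 //; exists s, x.
Qed.

Lemma main k (y : {ffun 'I_k -> 'I_my.+1}) :
    0 < prob PX th b (prefY y) ->
    (forall s : 'I_ms.+1,
       prob PX th b (fun om => prefY y om && (state om k == (s : nat)%:Z))
         / prob PX th b (prefY y) = th s) /\
    (forall w : int,
       prob PX th b (fun om => prefY y om && (wstate om ord_max == w))
         / prob PX th b (prefY y) = xi_of PX th w).
Proof.
have [c Hc] := claim y.
have Ptot : prob PX th b (prefY y) = c.
  rewrite (prob_gen Hc (G := fun _ _ => true)); last first.
    by move=> om x yl; rewrite prefY_ext andbT.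
  under eq_bigr => s _ do rewrite HPX.2 mulr1.
  by rewrite Hth.2 mulr1.
rewrite Ptot => hc; have cnz : c != 0 by rewrite gt_eqF.
split.
  move=> s0; rewrite (prob_gen Hc (G := fun t _ => t == (s0 : nat)%:Z)); last first.
    by move=> om x yl; rewrite prefY_ext state_ext.
  rewrite mulrC mulKf //.
  under eq_bigr => s _ do rewrite eqz_nat.
  rewrite (bigD1 s0) //= eqxx HPX.2 mulr1 big1 ?addr0 // => s hs.
  by rewrite big1 ?mulr0 // => x _; rewrite ifN.
move=> w; rewrite (prob_gen Hc (G := fun t x => t - (x : nat)%:Z == w)); last first.
  by move=> om x yl; rewrite prefY_ext wstate_ext_last.
rewrite mulrC mulKf // /xi_of.
under eq_bigr => s _ do rewrite mulr_sumr.
rewrite exchange_big /=; apply: eq_bigr => x _.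
rewrite [RHS]big_mkcond /=; apply: eq_bigr => s _.
by case: ifP => _; rewrite ?mulr0 // mulrC.
Qed.

End Aux.

Unset Implicit Arguments.
Set Strict Implicit.

Theorem lemma8 (R : realFieldType) (mx my ms : nat)
  (PX : {ffun 'I_mx.+1 -> R}) (th : {ffun 'I_ms.+1 -> R})
  (b : int -> 'I_my.+1 -> R) :
  (mx <= my)%N ->
  is_pmf PX -> is_pmf th ->
  structured PX th (xi_of PX th) b ->
  forall (k : nat) (y : {ffun 'I_k -> 'I_my.+1}),
    0 < prob PX th b (prefY y) ->
    (forall s : 'I_ms.+1,
       prob PX th b (fun om => prefY y om && (state om k == (s : nat)%:Z))
         / prob PX th b (prefY y) = th s) /\
    (forall w : int,
       prob PX th b (fun om => prefY y om && (wstate om ord_max == w))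
         / prob PX th b (prefY y) = xi_of PX th w).
Proof.
move=> Hmxy HPX Hth Hst k y; exact: main.
Qed.
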